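(* Assume the setting described in the context. Suppose Assumption (A1) holds, let $c=c_1/2$ where $c_1$ is the constant in the lower bound $d_{G^n}(x,y)\ge c_1\alpha(n)d_E(x,y)$ of (A1)(a), and assume that $(F,d_F)$ satisfies the midpoint property. If $r>0$, then there exists an integer $n_0$ such that \[\inf_{x\in F\setminus B_F(\rho,r)}d_{G^n}(\rho,g_n(x))\geq c\alpha(n) r\] for every $n\geq n_0$.
   Context: Let $(E,d_E)$ be a metric space and $F\subseteq E$ such that $F\cap\overline{B}_E(x,r)$ is compact for all $x\in E$, $r>0$ ($\overline{B}_E$, $B_E$ closed and open balls in $E$). Let $d_F:=d_E|_{F\times F}$, $B_F(x,r)$ the open ball in $(F,d_F)$, $\rho\in F$, $\nu$ a Radon measure of full support on $(F,d_F)$ (extended to $E$ by $\nu(A):=\nu(A\cap F)$), and $(q_t(x))_{x\in F,t>0}$ jointly continuous in $(t,x)$ with $q_t\ge0$, $\int_Fq_t\,d\nu=1$ for each $t>0$. The midpoint property: for all $x,y\in F$ there is $z\in F$ with $d_F(x,z)=\frac12d_F(x,y)=d_F(z,y)$. For a locally finite connected graph $G$ with at least two vertices: $d_G$ is the shortest-path metric; $\mu^G$ a symmetric weight with $\mu^G_{xy}>0$ iff $\{x,y\}$ is an edge; $\nu^G(A):=\sum_{x\in A}\sum_y\mu^G_{xy}$; $X^G$ the discrete time simple random walk with $P_G(x,y)=\mu^G_{xy}/\sum_z\mu^G_{xz}$, law $\mathbf{P}^G_x$. $(G^n)_{n\ge1}$ are such graphs with $V(G^n)\subseteq E$ and distinguished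 vertex $\rho$; write $\nu^n:=\nu^{G^n}$, $X^n:=X^{G^n}$. $(\alpha(n)),(\beta(n)),(\gamma(n))$ are non-negative sequences diverging to $\infty$. For $x\in E$, $g_n(x)$ is a point of $V(G^n)$ minimising $d_E(x,\cdot)$ over $V(G^n)$. Assumption (A1): (a) there is $c_1>0$ with $d_{G^n}(x,y)\ge c_1\alpha(n)d_E(x,y)$ for all $x,y\in V(G^n)$, $n\ge1$; and a non-negative $\tilde\alpha(n)=o(\alpha(n))$ such that for each $r>0$ there exist $c_2<\infty$, $n_0$ with $d_{G^n}(x,y)\le c_2\alpha(n)d_E(x,y)+\tilde\alpha(n)$ for all $x,y\in V(G^n)\cap B_E(\rho,r)$, $n\ge n_0$. (b) For each $r>0$, $\lim_n\sup_{x\in B_F(\rho,r)}d_E(x,V(G^n))=0$. (c) For every $x\in F$, $r>0$, $\lim_n\beta(n)^{-1}\nu^n(B_E(x,r))=\nu(B_E(x,r))$. (d) For every compact interval $I\subset(0,\infty)$, $x\in F$, $r>0$, $\lim_n\mathbf{P}^{G^n}_\rho(X^n_{\lfloor\gamma(n)t\rfloor}\in B_E(x,r))=\int_{B_F(x,r)}q_t(y)\nu(dy)$ uniformly for $t\in I$. *)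

(* Defs.v *)
From HB Require Import structures.
From mathcomp Require Import all_boot all_order all_algebra.
From mathcomp Require Import all_classical all_reals all_analysis.
Set Implicit Arguments. Unset Strict Implicit. Unset Printing Implicit Defensive.
Import Order.TTheory GRing.Theory Num.Theory.
Import numFieldNormedType.Exports.
Local Open Scope classical_set_scope.
Local Open Scope ring_scope.

Section MetricDefs.
Variables (R : realType) (E : Type) (d : E -> E -> R).

Definition is_metric : Prop :=
  [/\ forall x y, 0 <= d x y,
      forall x y, d x y = 0 <-> x = y,
      forall x y, d x y = d y x &
      forall x y z, d x z <= d x y + d y z].

Definition oball (x : E) (r : R) : set E := [set y | d x y < r].
Definition cball (x : E) (r : R) : set E := [set y | d x y <= r].

Definition d_open (U : set E) : Prop :=
  forall x, U x -> exists2 e : R, 0 < e & oball x e `<=` U.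

Definition d_compact (K : set E) : Prop :=
  forall (I : Type) (U : I -> set E), (forall i, d_open (U i)) ->
    K `<=` \bigcup_i U i ->
    exists2 J : set I, finite_set J & K `<=` \bigcup_(i in J) U i.

Definition dist_set (x : E) (A : set E) : R := inf [set d x y | y in A].

Definition midpoint_property (F : set E) : Prop :=
  forall x y, F x -> F y ->
    exists2 z, F z & d x z = d x y / 2 /\ d z y = d x y / 2.
End MetricDefs.

Section GraphDefs.
Variables (R : realType) (E : choiceType).
(* A weighted graph: vertex set V, symmetric weights mu; {x,y} is an edge
   iff mu x y > 0 (for x, y in V). *)
Variables (V : set E) (mu : E -> E -> R).

Definition adj (x y : E) : Prop := V x /\ V y /\ 0 < mu x y.

Fixpoint path_len (k : nat) (x y : E) : Prop :=
  match k with
  | 0%N => V x /\ x = y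
  | k'.+1 => exists2 z, adj x z & path_len k' z y
  end.

Definition gdist (x y : E) : R := inf [set k%:R | k in [set k | path_len k x y]].

Definition is_weighted_graph : Prop :=
  (forall x y, V x -> V y -> mu x y = mu y x) /\
  (forall x y, V x -> V y -> 0 <= mu x y) /\
  (forall x, V x -> mu x x = 0) /\
  (forall x, V x -> finite_set [set y | adj x y]) /\
  (forall x y, V x -> V y -> exists k, path_len k x y) /\
  (exists x y, [/\ V x, V y & x <> y]).

Definition wdeg (x : E) : R := (\sum_(y \in [set y | adj x y]) mu x y)%R.

Definition gmeasure (A : set E) : \bar R :=
  (\esum_(x in A `&` V) (wdeg x)%:E)%E.

Definition trans (x y : E) : R := mu x y / wdeg x.

(* P^G_x (X^G_k \in B) for the discrete time simple random walk *)
Fixpoint walk_prob (k : nat) (x : E) (B : set E) : R :=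
  match k with
  | 0%N => \1_B x
  | k'.+1 => (\sum_(z \in [set z | adj x z]) trans x z * walk_prob k' z B)%R
  end.
End GraphDefs.

Section MeasureDefs.
Local Open Scope ereal_scope.
Variables (R : realType) (dE : measure_display) (E : measurableType dE).
Variables (d : E -> E -> R) (F : set E) (nu : {measure set E -> \bar R}).

(* nu is a Radon measure on (F, d_F), extended to E by nu(A) = nu(A \cap F),
   with full support on F *)
Definition radon_full_support_on : Prop :=
  [/\ (forall A, measurable A -> nu A = nu (A `&` F)),
      (forall x, F x -> exists2 r : R, (0 < r)%R & nu (oball d x r) < +oo),
      (forall A, measurable A ->
          nu A = ereal_inf [set nu U | U in [set U | d_open d U /\ A `&` F `<=` U]]),
      (forall U, d_open d U ->
          nu U = ereal_sup [set nu K | K in [set K | d_compact d K /\ K `<=` U `&` F]])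
    & (forall x r, F x -> (0 < r)%R -> 0 < nu (oball d x r))].
End MeasureDefs.

(* Main.v *)
Require Import Defs.
From HB Require Import structures.
From mathcomp Require Import all_boot all_order all_algebra.
From mathcomp Require Import all_classical all_reals all_analysis.
From mathcomp Require Import ring lra.
Import Order.TTheory GRing.Theory Num.Theory.
Import numFieldNormedType.Exports.
Local Open Scope classical_set_scope.
Local Open Scope ring_scope.


Lemma halving (R : realType) (E : Type) (d : E -> E -> R) (F : set E) (rho : E) (r : R)
  (hd : is_metric d) (hmid : midpoint_property d F) (hrhoF : F rho) :
  forall m : nat, forall x, F x -> r <= d rho x -> d rho x < 2 ^+ m * r ->
    exists2 y, F y & [/\ r <= d rho y, d rho y < 2 * r & d y x <= d rho x - d rho y].
Proof.
case: hd => h0 h1 hs ht.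
elim=> [|m IH] x Fx rx xm.
  by move: xm; rewrite expr0 mul1r => /(le_lt_trans rx); rewrite ltxx.
have [x2|x2] := ltP (d rho x) (2 * r).
  by exists x => //; split => //; rewrite (proj2 (h1 x x)) // subrr.
have [z Fz [dz1 dz2]] := hmid rho x hrhoF Fx.
have [||y Fy [y1 y2 y3]] := IH z Fz.
- by rewrite dz1; lra.
- by rewrite dz1; move: xm; rewrite exprS; lra.
exists y => //; split => //.
have := ht y z x; rewrite dz2 -dz1; lra.
Qed.

Theorem lemma2p3
  (R : realType) (dE : measure_display) (E : measurableType dE)
  (d : E -> E -> R) (F : set E) (rho : E)
  (nu : {measure set E -> \bar R}) (q : R -> E -> R)
  (V : nat -> set E) (mu : nat -> E -> E -> R)
  (alpha beta gamma : nat -> R) (g : nat -> E -> E) (c1 r : R)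
  (* (E, d_E) metric space; measurable sets of E are its Borel sets *)
  (hd : is_metric d)
  (hborel : @measurable _ E = <<s [set U | d_open d U] >>)
  (* F \cap closed balls are compact *)
  (hF : forall x s, 0 < s -> d_compact d (F `&` cball d x s))
  (hrhoF : F rho)
  (* nu : Radon measure of full support on F, extended by nu(A) := nu(A \cap F) *)
  (hnu : radon_full_support_on d F nu)
  (* heat kernel q *)
  (hq_ge0 : forall t x, 0 < t -> F x -> 0 <= q t x)
  (hq_int : forall t, 0 < t -> (\int[nu]_(y in F) (q t y)%:E = 1)%E)
  (hq_cont : forall t x, 0 < t -> F x -> forall e, 0 < e ->
      exists2 del, 0 < del & forall s y, 0 < s -> F y ->
        `|s - t| < del -> d x y < del -> `|q s y - q t x| < e)
  (* the graphs G^n, with V(G^n) \subseteq E and distinguished vertex rho *)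
  (hG : forall n, is_weighted_graph (V n) (mu n))
  (hrhoV : forall n, V n rho)
  (* scaling sequences: non-negative and diverging *)
  (halpha0 : forall n, 0 <= alpha n) (hbeta0 : forall n, 0 <= beta n)
  (hgamma0 : forall n, 0 <= gamma n)
  (halpha : alpha @ \oo --> +oo) (hbeta : beta @ \oo --> +oo)
  (hgamma : gamma @ \oo --> +oo)
  (* g_n(x) : a closest point to x in V(G^n) *)
  (hgV : forall n x, V n (g n x))
  (hgmin : forall n x y, V n y -> d x (g n x) <= d x y)
  (* Assumption (A1)(a) *)
  (hc1 : 0 < c1)
  (hA1a_low : forall n x y, V n x -> V n y ->
      c1 * alpha n * d x y <= gdist (V n) (mu n) x y)
  (hA1a_up : exists2 alt : nat -> R, (forall n, 0 <= alt n) &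
      (alt =o_\oo alpha) /\
      forall s, 0 < s -> exists c2 : R, exists n0 : nat, forall n, (n0 <= n)%N ->
        forall x y, V n x -> V n y -> oball d rho s x -> oball d rho s y ->
          gdist (V n) (mu n) x y <= c2 * alpha n * d x y + alt n)
  (* Assumption (A1)(b) *)
  (hA1b : forall s, 0 < s -> forall e, 0 < e -> \forall n \near \oo,
      forall x, F x -> d rho x < s -> dist_set d x (V n) <= e)
  (* Assumption (A1)(c) *)
  (hA1c : forall x s, F x -> 0 < s ->
      (fun n => ((beta n)^-1)%:E * gmeasure (V n) (mu n) (oball d x s))%E @ \oo
        --> nu (oball d x s))
  (* Assumption (A1)(d) *)
  (hA1d : forall a b, 0 < a -> a <= b -> forall x s, F x -> 0 < s ->
      forall e, 0 < e -> \forall n \near \oo, forall t, a <= t <= b ->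
        (`| (walk_prob (V n) (mu n) (Num.truncn (gamma n * t)) rho (oball d x s))%:E
            - \int[nu]_(y in oball d x s `&` F) (q t y)%:E | < e%:E)%E)
  (* midpoint property of (F, d_F) *)
  (hmid : midpoint_property d F)
  (hr : 0 < r) :
  exists n0 : nat, forall n, (n0 <= n)%N ->
    forall x, F x -> ~ oball d rho r x ->
      (c1 / 2) * alpha n * r <= gdist (V n) (mu n) rho (g n x).
Proof.
have hr2 : 0 < 2 * r by rewrite mulr_gt0.
have hr4 : 0 < r / 4 by rewrite divr_gt0.
have [n0 _ Hn0] := hA1b (2 * r) hr2 (r / 4) hr4.
exists n0 => n hn x Fx nx.
have rx : r <= d rho x by rewrite leNgt; apply/negP.
case: (hd) => h0 h1 hs ht.
have hD0 : 0 <= d rho x / r by rewrite divr_ge0 // ltW.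
pose m := Num.Def.archi_bound (d rho x / r).
have xm : d rho x < 2 ^+ m * r.
  have h := archi_boundP hD0.
  have hm : (m%:R : R) <= 2 ^+ m.
    by rewrite -natrX ler_nat ltnW // ltn_expl.
  rewrite -ltr_pdivrMr //; exact: (lt_le_trans h hm).
have [y Fy [y1 y2 y3]] := @halving R E d F rho r hd hmid hrhoF m x Fx rx xm.
have := Hn0 n hn y Fy y2.
rewrite /dist_set => hinf.
have [||w [v Vv <-] hv] := @inf_lt R [set d y v | v in V n] (r / 2).
  by exists (d y rho), rho.
  by apply: (le_lt_trans hinf); lra.
have hg := hgmin n x v Vv.
have hgr : r / 2 <= d rho (g n x).
  have := ht rho (g n x) x; have := ht x y v; have := hs x y; have := hs x (g n x); lra.
apply: le_trans (hA1a_low n _ _ (hrhoV n) (hgV n x)).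
have ha := halpha0 n.
have : c1 * alpha n * (r / 2) <= c1 * alpha n * d rho (g n x).
  by rewrite ler_wpM2l // mulr_ge0 // ltW.
have -> : c1 / 2 * alpha n * r = c1 * alpha n * (r / 2) by ring.
done.
Qed.
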